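(* With the notation below, let $D=D_+-D_-\in\mathrm{Div}(C_p)$ with $D_\pm$ effective, and let $(h_i,\mu_i)$, $(h'_j,\mu'_j)$ be finite families in $H_p^+\times\mathbb{R}_+^*$ with $D_+=\sum_i\delta(h_i,\mu_i)$ and $D_-=\sum_j\delta(h'_j,\mu'_j)$. Assume $\deg(D)=0$ and that $h\in H_p$ satisfies $(p-1)h=\sum_ih_i-\sum_jh'_j$. Then the function $f(\lambda)=\sum_i\Theta_{h_i,\mu_i}(\lambda)-\sum_j\Theta_{h'_j,\mu'_j}(\lambda)-h\lambda$ is continuous, piecewise affine with slopes in $H_p$, satisfies $f(p\lambda)=f(\lambda)$ for all $\lambda\in\mathbb{R}_+^*$, and its principal divisor is $(f)=D$.
   Context: Let $p$ be a prime, $H_p=\mathbb{Z}[1/p]$, $H_p^+=H_p\cap(0,\infty)$. $C_p$ is the set of subgroups $H=\lambda H_p\subset\mathbb{R}$, $\lambda>0$. A divisor $D$ on $C_p$ assigns $D(H)\in H$ to each $H\in C_p$, zero for all but finitely many $H$; divisors form the group $\mathrm{Div}(C_p)$; $D$ is effective if $D(H)\geq0$ for all $H$; $\deg(D)=\sum_HD(H)$. For $h\in H_p^+$, $\mu>0$, $\delta(h,\mu)$ is the divisor supported at $\mu h^{-1}H_p$ with value $\mu$ there. For a continuous piecewise affine $f$ on $(0,\infty)$ with slopes in $H_p$ and $f(p\lambda)=f(\lambda)$, the order at $H=\lambda H_p$ is $\mathrm{Ord}_H(f)=h_+-h_-$, $h_\pm=\lim_{\epsilon\to0\pm}(f((1+\epsilon)\lambda)-f(\lambda))/\epsilon$,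 and $(f)(H)=\mathrm{Ord}_H(f)$. Let $\theta(\lambda)=\sum_{m\geq0}\max(0,1-p^m\lambda)+\sum_{m\geq1}\max(0,p^{-m}\lambda-1)$ and $\Theta_{h,\mu}(\lambda)=\mu\,\theta(\mu^{-1}h\lambda)$. *)

(* Defs.v *)
From HB Require Import structures.
From mathcomp Require Import all_boot all_order all_algebra.
From mathcomp Require Import all_classical all_reals all_analysis.
Set Implicit Arguments. Unset Strict Implicit. Unset Printing Implicit Defensive.
Import Order.TTheory GRing.Theory Num.Theory.
Import numFieldNormedType.Exports.
Local Open Scope classical_set_scope.
Local Open Scope ring_scope.

Section Defs.
Variables (R : realType) (p : nat).

Definition Hp : set R :=
  [set x | exists (z : int) (k : nat), x = z%:~R / (p%:R) ^+ k].

Definition Hp_pos : set R := [set x | Hp x /\ 0 < x].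

Definition scaleHp (l : R) : set R := [set l * x | x in Hp].

Definition Cp : set (set R) := [set H | exists l, 0 < l /\ H = scaleHp l].

Definition divisor_supp (D : set R -> R) : set (set R) :=
  [set H | Cp H /\ D H != 0].

Definition is_divisor (D : set R -> R) : Prop :=
  (forall H, Cp H -> H (D H)) /\
  (forall H, ~ Cp H -> D H = 0) /\
  finite_set (divisor_supp D).

Definition effective (D : set R -> R) : Prop := forall H, Cp H -> 0 <= D H.

Definition deg (D : set R -> R) : R := \sum_(H \in divisor_supp D) D H.

Definition delta (h mu : R) : set R -> R :=
  fun H => if `[< H = scaleHp (mu / h) >] then mu else 0.

Definition theta (l : R) : R :=
  limn (fun N => \sum_(0 <= m < N) Num.max 0 (1 - (p%:R) ^+ m * l))
  + limn (fun N => \sum_(1 <= m < N) Num.max 0 (l / (p%:R) ^+ m - 1)).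

Definition Theta (h mu : R) (l : R) : R := mu * theta (h * l / mu).

Definition pw_affine_Hp (f : R -> R) : Prop :=
  forall a b, 0 < a -> a < b ->
  exists (n : nat) (x s c : nat -> R),
    [/\ x 0%N = a, x n = b,
        (forall i, (i < n)%N -> x i < x i.+1) &
        (forall i, (i < n)%N -> Hp (s i) /\
           forall y, x i <= y <= x i.+1 -> f y = s i * y + c i)].

(* Ord_H(f) at H = lambda H_p: the one-sided limits h_+ and h_- exist and
   Ord = h_+ - h_- *)
Definition has_order_at (f : R -> R) (l o : R) : Prop :=
  exists hplus hminus : R,
    [/\ (fun e => (f ((1 + e) * l) - f l) / e) @ at_right 0 --> hplus,
        (fun e => (f ((1 + e) * l) - f l) / e) @ at_left 0 --> hminus &
        o = hplus - hminus].

End Defs.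

(* Main.v *)
Require Import Defs.
From HB Require Import structures.
From mathcomp Require Import all_boot all_order all_algebra.
From mathcomp Require Import all_classical all_reals all_analysis.
From mathcomp Require Import ring lra zify.
Import Order.TTheory GRing.Theory Num.Theory.
Import numFieldNormedType.Exports.
Local Open Scope classical_set_scope.
Local Open Scope ring_scope.
Section S.
Variables (R : realType) (p : nat).
Hypothesis pr_p : prime p.

Local Notation P := (p%:R : R).

Lemma p_gt1 : 1 < P.
Proof. by rewrite ltr1n prime_gt1. Qed.
Lemma p_gt0 : 0 < P.
Proof. by rewrite ltr0n prime_gt0. Qed.
Lemma pX_gt0 k : 0 < P ^+ k.
Proof. by rewrite exprn_gt0 // p_gt0. Qed.
Lemma pX_neq0 k : P ^+ k != 0.
Proof. by rewrite gt_eqF // pX_gt0. Qed.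

Lemma Hp_int (z : int) : Hp p (z%:~R : R).
Proof. by exists z, 0%N; rewrite expr0 divr1. Qed.

Lemma HpN (x : R) : Hp p x -> Hp p (- x).
Proof. by move=> [z [k ->]]; exists (- z), k; rewrite mulrNz mulNr. Qed.

Lemma HpD (x y : R) : Hp p x -> Hp p y -> Hp p (x + y).
Proof.
move=> [z [k ->]] [w [j ->]].
exists (z * (p%:Z) ^+ j + w * (p%:Z) ^+ k), (k + j)%N.
have hk := pX_neq0 k; have hj := pX_neq0 j.
rewrite intrD !intrM !rmorphXn /= !pmulrn exprD; field.
by rewrite hk hj.
Qed.

Lemma HpM (x y : R) : Hp p x -> Hp p y -> Hp p (x * y).
Proof.
move=> [z [k ->]] [w [j ->]].
exists (z * w), (k + j)%N.
have hk := pX_neq0 k; have hj := pX_neq0 j.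
rewrite intrM exprD; field.
by rewrite hk hj.
Qed.

Lemma HpB (x y : R) : Hp p x -> Hp p y -> Hp p (x - y).
Proof. by move=> hx hy; apply: HpD => //; apply: HpN. Qed.

Lemma Hp0 : Hp p (0 : R).
Proof. by have := Hp_int 0. Qed.

Lemma HpX m : Hp p (P ^+ m).
Proof. by have := Hp_int ((p%:Z) ^+ m); rewrite rmorphXn /= pmulrn. Qed.

Lemma Hp_divX (x : R) m : Hp p x -> Hp p (x / P ^+ m).
Proof.
move=> [z [k ->]]; exists z, (k + m)%N.
have hk := pX_neq0 k; have hm := pX_neq0 m.
rewrite exprD; field. by rewrite hk hm.
Qed.

Lemma Hp_sum (I : Type) (r : seq I) (F : I -> R) :
  (forall i, Hp p (F i)) -> Hp p (\sum_(i <- r) F i).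
Proof.
move=> HF; elim: r => [|i r IH]; first by rewrite big_nil; apply: Hp0.
by rewrite big_cons; apply: HpD.
Qed.

Lemma pX_ge (x : R) : exists N : nat, x < P ^+ N.
Proof.
case: (lerP x 0) => hx.
  by exists 0%N; rewrite expr0; lra.
exists (Num.Def.archi_bound x).
apply: (lt_le_trans (archi_boundP (ltW hx))).
rewrite -natrX ler_nat; apply: ltnW; apply: ltn_expl.
exact: prime_gt1.
Qed.

Lemma pX_mono m n : (m <= n)%N -> P ^+ m <= P ^+ n.
Proof. by move=> mn; rewrite ler_eXn2l // p_gt1. Qed.

Lemma pX_inj m n : P ^+ m = P ^+ n -> m = n.
Proof.
move=> e; apply/eqP; rewrite eqn_leq -(ler_eXn2l p_gt1) e lexx.
by rewrite -(ler_eXn2l p_gt1) e lexx.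
Qed.


Definition LA (l : R) N := \sum_(0 <= m < N) Num.max 0 (1 - P ^+ m * l).
Definition LB (l : R) N := \sum_(1 <= m < N) Num.max 0 (l / P ^+ m - 1).

Lemma theta_LALB l : theta p l = limn (LA l) + limn (LB l).
Proof. by []. Qed.

Lemma lim_evconst (u : nat -> R) N :
  (forall M, (N <= M)%N -> u M = u N) -> limn u = u N.
Proof.
move=> H; apply: cvg_lim => //; apply: cvg_near_cst.
near=> M; apply: H; near: M; exact: nbhs_infty_ge.
Unshelve. all: by end_near.
Qed.

Lemma limA l N : 1 <= P ^+ N * l -> limn (LA l) = LA l N.
Proof.
move=> hN; apply: lim_evconst => M NM; rewrite /LA (@big_cat_nat _ _ _ N 0 M) //=.
suff -> : \sum_(N <= m < M) Num.max 0 (1 - P ^+ m * l) = 0 by rewrite addr0.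
rewrite big_nat_cond big1 // => m /andP[/andP[Nm _] _].
apply/max_idPl; rewrite subr_le0; apply: (le_trans hN).
have l0 : 0 <= l.
  have := pX_gt0 N; move: hN; case: (lerP 0 l) => // l0 h1 h2.
  have : P ^+ N * l < 0 by rewrite pmulr_rlt0.
  lra.
by rewrite ler_wpM2r // pX_mono.
Qed.

Lemma limB l N : 0 <= l -> l <= P ^+ N -> limn (LB l) = LB l N.
Proof.
move=> l0 hN; apply: lim_evconst => M NM.
case: N hN NM => [|N] hN NM.
  rewrite /LB [X in _ = X]big_geq // big_nat_cond big1 // => m /andP[/andP[m1 _] _].
  apply/max_idPl; rewrite subr_le0 ler_pdivrMr ?pX_gt0 // mul1r.
  by apply: (le_trans hN); apply: pX_mono.
rewrite /LB (@big_cat_nat _ _ _ N.+1 1 M) //=.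
suff -> : \sum_(N.+1 <= m < M) Num.max 0 (l / P ^+ m - 1) = 0 by rewrite addr0.
rewrite big_nat_cond big1 // => m /andP[/andP[Nm _] _].
apply/max_idPl; rewrite subr_le0 ler_pdivrMr ?pX_gt0 // mul1r.
by apply: (le_trans hN); apply: pX_mono.
Qed.


Lemma theta_per x : 0 < x -> theta p (P * x) = theta p x + x - 1.
Proof.
move=> x0; have [N hN] := pX_ge (x + x^-1).
have xi0 : 0 < x^-1 by rewrite invr_gt0.
have hx : x <= P ^+ N by lra.
have hxi : 1 <= P ^+ N * x.
  have : x^-1 <= P ^+ N by lra.
  by rewrite -(ler_pM2r x0) mulVf ?gt_eqF.
have Px0 : 0 < P * x by rewrite mulr_gt0 // p_gt0.
have N0 : (0 < N)%N.
  by case: (N) hN hxi => // ; rewrite expr0 mul1r => *; lra.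
rewrite !theta_LALB (limA (P * x) N); last first.
  apply: (le_trans hxi); rewrite ler_pM2l ?pX_gt0 //.
  by have := p_gt1; nra.
rewrite (limA x N.+1); last first.
  apply: (le_trans hxi); rewrite ler_pM2r // pX_mono //.
rewrite (limB (P * x) N.+1); [| exact: ltW | by rewrite exprS ler_pM2l ?p_gt0].
rewrite (limB x N); [| exact: ltW | by []].
rewrite /LA /LB [\sum_(0 <= m < N.+1) _]big_nat_recl //.
rewrite [\sum_(1 <= m < N.+1) _]big_nat_recl //.
rewrite expr0 mul1r expr1.
have -> : P * x / P = x by field; rewrite gt_eqF // p_gt0.
have e1 : \sum_(0 <= i < N) Num.max 0 (1 - P ^+ i * (P * x)) =
          \sum_(0 <= i < N) Num.max 0 (1 - P ^+ i.+1 * x).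
  by apply: eq_bigr => i _; rewrite exprSr mulrA.
have e2 : \sum_(1 <= i < N) Num.max 0 (P * x / P ^+ i.+1 - 1) =
          \sum_(1 <= i < N) Num.max 0 (x / P ^+ i - 1).
  apply: eq_bigr => i _; congr (Num.max 0 (_ - 1)).
  by rewrite exprS; field; rewrite pX_neq0 gt_eqF // p_gt0.
rewrite e1 e2.
case: (lerP x 1) => x1.
  rewrite (max_idPr (_ : 0 <= 1 - x)) ?subr_ge0 //.
  rewrite (max_idPl (_ : x - 1 <= 0)) ?subr_le0 //.
  lra.
rewrite (max_idPl (_ : 1 - x <= 0)) ?subr_le0 ?ltW //.
rewrite (max_idPr (_ : 0 <= x - 1)) ?subr_ge0 ?ltW //.
lra.
Qed.



Definition kink (a b y : R) := Num.max 0 (a * y + b).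

Definition dq (f : R -> R) (l e : R) := (f ((1 + e) * l) - f l) / e.

Lemma order_def (f : R -> R) (l o : R) : has_order_at f l o <->
  exists hp hm, [/\ dq f l e @[e --> 0^'+] --> hp, dq f l e @[e --> 0^'-] --> hm
     & o = hp - hm].
Proof. by []. Qed.

Lemma order_affine (s t l : R) : has_order_at (fun y => s * y + t) l 0.
Proof.
apply/order_def; exists (s * l), (s * l); split; last by rewrite subrr.
  apply: cvg_near_cst; near=> e.
  have e0 : 0 < e by near: e; exact: nbhs_right_gt.
  by rewrite /dq; field; rewrite gt_eqF.
apply: cvg_near_cst; near=> e.
have e0 : e < 0 by near: e; exact: nbhs_left_lt.
by rewrite /dq; field; rewrite lt_eqF.
Unshelve. all: by end_near.
Qed.

Lemma order_ext {f g : R -> R} {l o : R} : (\forall y \near l, f y = g y) ->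
  has_order_at g l o -> has_order_at f l o.
Proof.
move=> H /order_def [hp [hm [Hp Hm ->]]]; apply/order_def; exists hp, hm.
have fl : f l = g l := nbhs_singleton H.
have cont : (fun e : R => (1 + e) * l) @ 0 --> (1 + 0) * l.
  by apply: cvgMr_tmp; apply: cvgD; [exact: cvg_cst | exact: cvg_id].
rewrite addr0 mul1r in cont.
have Hq : \forall e \near 0, dq g l e = dq f l e.
  have H' : \forall e \near 0, f ((1 + e) * l) = g ((1 + e) * l) := cont _ H.
  by apply: filterS H' => e /= He; rewrite /dq He fl.
split => //.
  apply: cvg_trans Hp; apply: near_eq_cvg; exact: cvg_within Hq.
apply: cvg_trans Hm; apply: near_eq_cvg; exact: cvg_within Hq.
Qed.


Lemma order_eqfun {f g : R -> R} {l o o' : R} : (forall y, f y = g y) -> o = o' ->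
  has_order_at g l o -> has_order_at f l o'.
Proof. by move=> /funext -> ->. Qed.

Lemma order_add {f g : R -> R} {l o1 o2 : R} :
  has_order_at f l o1 -> has_order_at g l o2 ->
  has_order_at (fun y => f y + g y) l (o1 + o2).
Proof.
move=> /order_def [hp1 [hm1 [P1 M1 ->]]] /order_def [hp2 [hm2 [P2 M2 ->]]].
apply/order_def; exists (hp1 + hp2), (hm1 + hm2).
have -> : dq (fun y => f y + g y) l = fun e => dq f l e + dq g l e.
  by apply/funext => e; rewrite /dq; ring.
split; [exact: cvgD | exact: cvgD | ring].
Qed.

Lemma order_scale (c : R) {f : R -> R} {l o : R} :
  has_order_at f l o -> has_order_at (fun y => c * f y) l (c * o).
Proof.
move=> /order_def [hp [hm [P1 M1 ->]]].
apply/order_def; exists (c * hp), (c * hm).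
have -> : dq (fun y => c * f y) l = fun e => c * dq f l e.
  by apply/funext => e; rewrite /dq; ring.
split; [exact: cvgMl_tmp | exact: cvgMl_tmp | ring].
Qed.

Lemma order_sum (I : Type) (r : seq I) (F : I -> R -> R) (o : I -> R) (l : R) :
  (forall i, has_order_at (F i) l (o i)) ->
  has_order_at (fun y => \sum_(i <- r) F i y) l (\sum_(i <- r) o i).
Proof.
move=> HF; elim: r => [|i r IH].
  apply: (order_eqfun _ _ (order_affine 0 0 l)).
    by move=> y; rewrite big_nil; ring.
  by rewrite big_nil.
have H := order_add (HF i) IH.
apply: (order_eqfun _ _ H) => [y|]; by rewrite big_cons.
Qed.

Lemma cont_affine (a b l : R) : (fun y => a * y + b) @ l --> a * l + b.
Proof. by apply: cvgD; [apply: cvgMl_tmp; exact: cvg_id | exact: cvg_cst]. Qed.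

Lemma order_kink (a b l : R) :
  has_order_at (kink a b) l (if a * l + b == 0 then `|a * l| else 0).
Proof.
case: ltgtP => hs.
- apply: (order_ext _ (order_affine 0 0 l)).
  have H0 := cvgr_lt _ (cont_affine a b l) _ hs.
  near=> y; have hy : a * y + b < 0 by near: y; exact: H0.
  by rewrite /kink mul0r addr0; apply/max_idPl; apply: ltW.
- apply: (order_ext _ (order_affine a b l)).
  have H0 := cvgr_gt _ (cont_affine a b l) _ hs.
  near=> y; have hy : 0 < a * y + b by near: y; exact: H0.
  by rewrite /kink; apply/max_idPr; apply: ltW.
have kl : kink a b l = 0 by rewrite /kink hs maxxx.
have kq : forall e, kink a b ((1 + e) * l) = Num.max 0 ((a * l) * e).
  by move=> e; rewrite /kink; congr (Num.max 0 _); lra.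
apply/order_def.
case: (lerP 0 (a * l)) => c0.
- exists (a * l), 0; split; last by rewrite subr0 ger0_norm.
    apply: cvg_near_cst; near=> e.
    have e0 : 0 < e by near: e; exact: nbhs_right_gt.
    have h : 0 <= a * l * e by nra.
    rewrite /dq kl kq subr0 (max_idPr h).
    by field; rewrite gt_eqF.
  apply: cvg_near_cst; near=> e.
  have e0 : e < 0 by near: e; exact: nbhs_left_lt.
  have h : a * l * e <= 0 by nra.
  by rewrite /dq kl kq subr0 (max_idPl h) mul0r.
- exists 0, (a * l); split; last by rewrite sub0r ltr0_norm.
    apply: cvg_near_cst; near=> e.
    have e0 : 0 < e by near: e; exact: nbhs_right_gt.
    have h : a * l * e <= 0 by nra.
    by rewrite /dq kl kq subr0 (max_idPl h) mul0r.
  apply: cvg_near_cst; near=> e.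
  have e0 : e < 0 by near: e; exact: nbhs_left_lt.
  have h : 0 <= a * l * e by nra.
  rewrite /dq kl kq subr0 (max_idPr h).
  by field; rewrite lt_eqF.
Unshelve. all: by end_near.
Qed.


Lemma cont_kink (a b l : R) : kink a b y @[y --> l] --> kink a b l.
Proof.
have := @continuous_max R R (fun=> 0) (fun y => a * y + b) l (cvg_cst _) (cont_affine a b l).
move=> H; rewrite /kink; apply: H; exact: _.
Qed.

Lemma cont_add (f g : R -> R) (l : R) : f y @[y --> l] --> f l -> g y @[y --> l] --> g l ->
  f y + g y @[y --> l] --> f l + g l.
Proof. by move=> hf hg; apply: cvgD. Qed.

Lemma cont_scale (c : R) (f : R -> R) (l : R) : f y @[y --> l] --> f l ->
  c * f y @[y --> l] --> c * f l.
Proof. by move=> hf; apply: cvgMl_tmp. Qed.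

Lemma cont_sum (I : Type) (r : seq I) (F : I -> R -> R) (l : R) :
  (forall i, F i y @[y --> l] --> F i l) ->
  \sum_(i <- r) F i y @[y --> l] --> \sum_(i <- r) F i l.
Proof.
move=> HF; elim: r => [|i r IH].
  rewrite big_nil; under eq_fun do rewrite big_nil; exact: cvg_cst.
rewrite big_cons; under eq_fun do rewrite big_cons; exact: cvgD.
Qed.


Definition affine_on (f : R -> R) (u v : R) :=
  exists s c, Hp p s /\ forall y, u <= y <= v -> f y = s * y + c.

Definition PA (f : R -> R) (a b : R) (K : seq R) :=
  forall u v, a <= u -> u < v -> v <= b -> (forall k, k \in K -> ~ (u < k < v)) ->
  affine_on f u v.

Definition PAe f a b := exists K, PA f a b K.

Definition pwb (f : R -> R) (a b : R) :=
  exists (n : nat) (x s c : nat -> R),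
    [/\ x 0%N = a, x n = b,
        (forall i, (i < n)%N -> x i < x i.+1) &
        (forall i, (i < n)%N -> Hp p (s i) /\
           forall y, x i <= y <= x i.+1 -> f y = s i * y + c i)].

Lemma pwb_concat f a k b : a < k -> k < b -> pwb f a k -> pwb f k b -> pwb f a b.
Proof.
move=> ak kb [n1 [x1 [s1 [c1 [x10 x1n x1i x1p]]]]] [n2 [x2 [s2 [c2 [x20 x2n x2i x2p]]]]].
have n1p : (0 < n1)%N.
  by case: n1 x1n {x1i x1p} => [|//] h; move: ak; rewrite -x10 h ltxx.
have n2p : (0 < n2)%N.
  by case: n2 x2n {x2i x2p} => [|//] h; move: kb; rewrite -x20 h ltxx.
pose x i := if (i < n1)%N then x1 i else x2 (i - n1)%N.
pose s i := if (i < n1)%N then s1 i else s2 (i - n1)%N.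
pose c i := if (i < n1)%N then c1 i else c2 (i - n1)%N.
have xL i : (i < n1)%N -> x i = x1 i by rewrite /x => ->.
have xR i : (n1 <= i)%N -> x i = x2 (i - n1)%N by rewrite /x ltnNge => ->.
have xS i : (i < n1)%N -> x i.+1 = x1 i.+1.
  move=> hi; rewrite /x; case: ltnP => // h.
  have e : i.+1 = n1 by lia.
  by rewrite e subnn x20 x1n.
exists (n1 + n2)%N, x, s, c; split.
- by rewrite xL.
- by rewrite xR ?leq_addr // addKn.
- move=> i hi; case: (ltnP i n1) => h.
    by rewrite xL // xS //; apply: x1i.
  rewrite xR // xR; last by lia.
  rewrite subSn //; apply: x2i; lia.
- move=> i hi; case: (ltnP i n1) => h.
    rewrite /s /c h xL // xS //; exact: x1p.
  rewrite /s /c ltnNge h /= xR // xR; last by lia.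
  rewrite subSn //; apply: x2p; lia.
Qed.

Lemma PA_pw f K : forall a b, a < b -> PA f a b K -> pwb f a b.
Proof.
elim: K => [|k K IH] a b ab HP.
  have [s [c [Hs Hf]]] : affine_on f a b.
    by apply: HP => //; rewrite ?lexx.
  exists 1%N, (fun i => if i == 0%N then a else b), (fun=> s), (fun=> c); split => //.
    by move=> i; rewrite ltnS leqn0 => /eqP ->.
  by move=> i; rewrite ltnS leqn0 => /eqP -> /=.
case: (boolP ((a < k) && (k < b))) => [/andP[ak kb]|nk].
  apply: (@pwb_concat f a k b ak kb).
    apply: IH => // u v au uv vk HK; apply: HP => //; first by apply: le_trans vk (ltW kb).
    move=> k'; rewrite inE => /orP[/eqP -> | /HK //]; lra.
  apply: IH => // u v ku uv vb HK; apply: HP => //; first by apply: le_trans (ltW ak) ku.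
  move=> k'; rewrite inE => /orP[/eqP -> | /HK //]; lra.
apply: IH => // u v au uv vb HK; apply: HP => //.
move=> k'; rewrite inE => /orP[/eqP -> | /HK //].
move=> /andP[uk kv]; move/negP: nk; apply; apply/andP; split.
  exact: le_lt_trans au uk.
exact: lt_le_trans kv vb.
Qed.


Lemma PA_ext {f g : R -> R} {a b K} : (forall y, a <= y <= b -> f y = g y) ->
  PA g a b K -> PA f a b K.
Proof.
move=> E H u v au uv vb HK; have [s [c [Hs Hg]]] := H u v au uv vb HK.
exists s, c; split => // y /andP[uy yv]; rewrite E; first by apply: Hg; rewrite uy yv.
by rewrite (le_trans au uy) (le_trans yv vb).
Qed.

Lemma PA_add (f g : R -> R) a b K1 K2 : PA f a b K1 -> PA g a b K2 ->
  PA (fun y => f y + g y) a b (K1 ++ K2).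
Proof.
move=> H1 H2 u v au uv vb HK.
have HK1 : forall k, k \in K1 -> ~ (u < k < v).
  by move=> k hk; apply: HK; rewrite mem_cat hk.
have HK2 : forall k, k \in K2 -> ~ (u < k < v).
  by move=> k hk; apply: HK; rewrite mem_cat hk orbT.
have [s1 [c1 [Hs1 E1]]] := H1 u v au uv vb HK1.
have [s2 [c2 [Hs2 E2]]] := H2 u v au uv vb HK2.
exists (s1 + s2), (c1 + c2); split; first exact: HpD.
by move=> y hy; rewrite E1 // E2 //; ring.
Qed.

Lemma PA_scale (c : R) (f : R -> R) a b K : Hp p c -> PA f a b K ->
  PA (fun y => c * f y) a b K.
Proof.
move=> Hc H u v au uv vb HK; have [s [t [Hs E]]] := H u v au uv vb HK.
exists (c * s), (c * t); split; first exact: HpM.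
by move=> y hy; rewrite E //; ring.
Qed.

Lemma PA_affine (s t a b : R) : Hp p s -> PA (fun y => s * y + t) a b [::].
Proof. by move=> Hs u v _ _ _ _; exists s, t. Qed.

Lemma PAe_add {f g : R -> R} {a b} : PAe f a b -> PAe g a b -> PAe (fun y => f y + g y) a b.
Proof. by move=> [K1 H1] [K2 H2]; exists (K1 ++ K2); apply: PA_add. Qed.

Lemma PAe_sum (I : Type) (r : seq I) (F : I -> R -> R) a b :
  (forall i, PAe (F i) a b) -> PAe (fun y => \sum_(i <- r) F i y) a b.
Proof.
move=> HF; elim: r => [|i r IH].
  exists [::]; apply: (PA_ext _ (PA_affine 0 0 a b Hp0)).
  by move=> y _; rewrite big_nil; ring.
have [K H] := PAe_add (HF i) IH; exists K; apply: (PA_ext _ H).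
by move=> y _; rewrite big_cons.
Qed.

Lemma PA_kink (g al be a b : R) : Hp p (g * al) ->
  PA (fun y => g * kink al be y) a b [:: - be / al].
Proof.
move=> Hg u v au uv vb HK.
have Hr : ~ (u < - be / al < v) by apply: HK; rewrite inE eqxx.
case: (eqVneq al 0) => [->|al0].
  exists 0, (g * Num.max 0 be); split; first exact: Hp0.
  by move=> y _; rewrite /kink mul0r add0r; ring.
set r := - be / al in Hr.
have ar : al * r = - be by rewrite /r; field.
have pos : (forall y, u <= y <= v -> 0 <= al * y + be) \/
           (forall y, u <= y <= v -> al * y + be <= 0).
  have rr : r <= u \/ v <= r.
    case: (lerP r u) => h; first by left.
    case: (lerP v r) => h'; first by right.
    by exfalso; apply: Hr; rewrite h h'.
  case: (ltgtP al 0) => ha; last by move/eqP: al0.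
    case: rr => rr; [right | left] => y /andP[uy yv]; nra.
  case: rr => rr; [left | right] => y /andP[uy yv]; nra.
case: pos => pos.
  exists (g * al), (g * be); split => // y hy.
  by rewrite /kink (max_idPr (pos y hy)); ring.
exists 0, 0; split; first exact: Hp0.
by move=> y hy; rewrite /kink (max_idPl (pos y hy)); ring.
Qed.


Lemma scale_mul (l w : R) : Hp p w -> Hp p w^-1 -> w != 0 ->
  scaleHp p (l * w) = scaleHp p l.
Proof.
move=> Hw Hwi w0; apply/seteqP; split => y [z Hz <-].
  by exists (w * z); [apply: HpM | rewrite mulrA].
exists (w^-1 * z); [exact: HpM | by field].
Qed.

Lemma Hp1 : Hp p (1 : R).
Proof. by have := Hp_int 1. Qed.

Lemma HpXV k : Hp p ((P ^+ k)^-1).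
Proof. by rewrite -div1r; apply: Hp_divX; exact: Hp1. Qed.

Lemma scale_eq (l c : R) : 0 < l -> 0 < c ->
  scaleHp p l = scaleHp p c <->
  (exists k, P ^+ k * (l / c) = 1) \/ (exists k, l / c = P ^+ k).
Proof.
move=> l0 c0; split; last first.
  case=> [[k hk]|[k hk]].
    have -> : c = l * P ^+ k.
      by rewrite -[LHS]mul1r -{1}hk; field; rewrite gt_eqF.
    by rewrite scale_mul //; [exact: HpX | exact: HpXV | exact: pX_neq0].
  have -> : l = c * P ^+ k by rewrite -hk mulrC divfK // gt_eqF.
  by rewrite scale_mul //; [exact: HpX | exact: HpXV | exact: pX_neq0].
move=> E.
have : scaleHp p l c by rewrite E; exists 1; [exact: Hp1 | rewrite mulr1].
case=> z [z1 [a ez]] cz.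
have : scaleHp p c l by rewrite -E; exists 1; [exact: Hp1 | rewrite mulr1].
case=> w [w1 [b ew]] lw.
have zw : z * w = 1.
  by apply: (mulfI (negbT (gt_eqF l0))); rewrite mulr1 mulrA cz lw.
have z0 : 0 < z.
  have : 0 < l * z by rewrite cz.
  by rewrite pmulr_rgt0.
have w0 : 0 < w.
  have : 0 < c * w by rewrite lw.
  by rewrite pmulr_rgt0.
have z10 : (0 < z1)%R.
  have : 0 < (z1%:~R : R) by move: z0; rewrite ez pmulr_lgt0 // invr_gt0 pX_gt0.
  by rewrite ltr0z.
have w10 : (0 < w1)%R.
  have : 0 < (w1%:~R : R) by move: w0; rewrite ew pmulr_lgt0 // invr_gt0 pX_gt0.
  by rewrite ltr0z.
case: z1 ez z10 => [n1|//] ez _; case: w1 ew w10 => [n2|//] ew _.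
have {ez}ez : z = n1%:R / P ^+ a by exact: ez.
have {ew}ew : w = n2%:R / P ^+ b by exact: ew.
have e : (n1 * n2)%N = (p ^ (a + b))%N.
  apply/eqP; rewrite -(eqr_nat R) natrM natrX exprD; apply/eqP.
  have ha := pX_neq0 a; have hb := pX_neq0 b.
  move: zw; rewrite ez ew => zw.
  move/(congr1 (fun t => t * (P ^+ a * P ^+ b))): zw; rewrite mul1r => <-; field; by rewrite ha hb.
have : (n1 %| p ^ (a + b))%N by rewrite -e dvdn_mulr.
case/(dvdn_pfactor _ _ pr_p) => j _ n1j.
rewrite n1j natrX in ez.
have lc : l / c = P ^+ a / P ^+ j.
  have ha := pX_neq0 a; have hj := pX_neq0 j.
  rewrite -cz ez; field; rewrite ha hj gt_eqF //.
case: (leqP j a) => ja.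
  right; exists (a - j)%N; rewrite lc.
  have -> : a = ((a - j) + j)%N by rewrite subnK.
  rewrite exprD addnK; field; exact: pX_neq0.
left; exists (j - a)%N; rewrite lc.
have -> : j = ((j - a) + a)%N by rewrite subnK // ltnW.
rewrite exprD addnK; field; by rewrite !pX_neq0.
Qed.


Lemma sum_ind (r : seq nat) (k : nat) (F : nat -> R) : uniq r -> k \in r ->
  (forall m, F m = if m == k then 1 else 0) -> \sum_(m <- r) F m = 1.
Proof.
move=> ur kr HF; rewrite (bigD1_seq k) //= HF eqxx big1 ?addr0 // => m /negPf mk.
by rewrite HF mk.
Qed.

Lemma count_ind (x : R) N : 0 < x -> 1 < P ^+ N * x -> x < P ^+ N ->
  \sum_(0 <= m < N) (if P ^+ m * x == 1 then 1 else 0 : R) +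
  \sum_(1 <= m < N) (if x == P ^+ m then 1 else 0 : R)
  = (if `[< (exists k, P ^+ k * x = 1) \/ (exists k, x = P ^+ k) >] then 1 else 0 : R).
Proof.
move=> x0 h1 h2.
case: (pselect (exists k, P ^+ k * x = 1)) => [[k hk]|nA].
  rewrite asboolT; last by left; exists k.
  have kN : (k < N)%N.
    rewrite ltnNge; apply/negP => Nk.
    have : P ^+ N * x <= P ^+ k * x by rewrite ler_pM2r // pX_mono.
    lra.
  rewrite (@sum_ind _ k) ?iota_uniq ?mem_index_iota //; last first.
    move=> m; case: (eqVneq m k) => [->|mk]; first by rewrite hk eqxx.
    case: (eqVneq (P ^+ m * x) 1) => // e; exfalso; apply: (negP mk); apply/eqP; apply: pX_inj.
    apply: (mulIf (negbT (gt_eqF x0))); by rewrite e hk.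
  rewrite big_nat_cond big1 ?addr0 // => m /andP[/andP[m1 _] _].
  case: (eqVneq x (P ^+ m)) => // e; exfalso.
  have : P ^+ (k + m) = P ^+ 0 by rewrite exprD expr0 -e.
  move/pX_inj; lia.
rewrite big_nat_cond big1 ?add0r; last first.
  move=> m _; case: (eqVneq (P ^+ m * x) 1) => // e; exfalso; apply: nA; by exists m.
case: (pselect (exists k, x = P ^+ k)) => [[k hk]|nB].
  rewrite asboolT; last by right; exists k.
  have k1 : (1 <= k)%N.
    case: k hk => // hk; exfalso; apply: nA; exists 0%N.
    by rewrite expr0 mul1r hk expr0.
  have kN : (k < N)%N by rewrite -(ltr_eXn2l p_gt1) -hk.
  rewrite (@sum_ind _ k) ?iota_uniq ?mem_index_iota ?k1 //.
  move=> m; case: (eqVneq m k) => [->|mk]; first by rewrite hk eqxx.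
  case: (eqVneq x (P ^+ m)) => // e; exfalso; apply: (negP mk); apply/eqP; apply: pX_inj; by rewrite -e hk.
rewrite asboolF; last by case.
rewrite big_nat_cond big1 // => m _; case: (eqVneq x (P ^+ m)) => // e; exfalso; apply: nB.
by exists m.
Qed.


Definition TN N (h mu : R) (y : R) :=
  \sum_(0 <= m < N) mu * kink (- (P ^+ m * (h / mu))) 1 y +
  \sum_(1 <= m < N) mu * kink (h / mu / P ^+ m) (-1) y.

Lemma Theta_TN N (h mu y : R) : 0 < mu -> 0 <= h * y / mu ->
  1 <= P ^+ N * (h * y / mu) -> h * y / mu <= P ^+ N ->
  Theta p h mu y = TN N h mu y.
Proof.
move=> mu0 x0 h1 h2; rewrite /Theta theta_LALB (limA _ N) // (limB _ N) //.
rewrite /LA /LB /TN mulrDr !mulr_sumr; congr (_ + _); apply: eq_bigr => m _;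
  rewrite /kink; congr (_ * Num.max 0 _); ring.
Qed.

Lemma TN_PA N (h mu a b : R) : Hp p h -> 0 < mu -> PAe (TN N h mu) a b.
Proof.
move=> Hh mu0; apply: PAe_add; apply: PAe_sum => m.
  exists [:: - 1 / (- (P ^+ m * (h / mu)))]; apply: PA_kink.
  have -> : mu * - (P ^+ m * (h / mu)) = - (P ^+ m * h) by field; rewrite gt_eqF.
  by apply: HpN; apply: HpM => //; apply: HpX.
exists [:: - (-1) / (h / mu / P ^+ m)]; apply: PA_kink.
have -> : mu * (h / mu / P ^+ m) = h / P ^+ m.
  by field; rewrite pX_neq0 gt_eqF.
exact: Hp_divX.
Qed.

Lemma TN_cont N (h mu l : R) : TN N h mu y @[y --> l] --> TN N h mu l.
Proof.
apply: cont_add; apply: cont_sum => m; apply: cont_scale; exact: cont_kink.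
Qed.

Lemma term1 (c l : R) m :
  (if - (P ^+ m * c) * l + 1 == 0 then `|- (P ^+ m * c) * l| else 0) =
  (if P ^+ m * (c * l) == 1 then 1 else 0 : R).
Proof.
have E : - (P ^+ m * c) * l + 1 = 1 - P ^+ m * (c * l) by ring.
rewrite E subr_eq0 eq_sym; case: (eqVneq (P ^+ m * (c * l)) 1) => // e.
have -> : - (P ^+ m * c) * l = - 1 by rewrite mulNr -mulrA e.
by rewrite normrN normr1.
Qed.

Lemma term2 (c l : R) m :
  (if c / P ^+ m * l + -1 == 0 then `|c / P ^+ m * l| else 0) =
  (if c * l == P ^+ m then 1 else 0 : R).
Proof.
have hm := pX_neq0 m.
have E : (c / P ^+ m * l + -1 == 0) = (c * l == P ^+ m).
  rewrite subr_eq0.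
  apply/eqP/eqP => e.
    by move/(congr1 (fun t => t * P ^+ m)): e; rewrite mul1r => <-; field.
  by rewrite mulrAC e mulfV.
rewrite E; case: (eqVneq (c * l) (P ^+ m)) => // e.
have -> : c / P ^+ m * l = 1 by rewrite mulrAC e mulfV.
by rewrite normr1.
Qed.

Lemma TN_order N (h mu l : R) : 0 < h -> 0 < mu -> 0 < l ->
  1 < P ^+ N * (h / mu * l) -> h / mu * l < P ^+ N ->
  has_order_at (TN N h mu) l (delta p h mu (scaleHp p l)).
Proof.
move=> h0 mu0 l0 h1 h2.
have H := order_add (@order_sum nat (index_iota 0 N) _ _ l
   (fun m => order_scale mu (order_kink (- (P ^+ m * (h / mu))) 1 l)))
   (@order_sum nat (index_iota 1 N) _ _ l
   (fun m => order_scale mu (order_kink (h / mu / P ^+ m) (-1) l))).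
apply: (order_eqfun _ _ H) => //.
under eq_bigr do rewrite term1.
under [X in _ + X = _]eq_bigr do rewrite term2.
rewrite -!mulr_sumr -mulrDr count_ind //; last by rewrite mulr_gt0 // divr_gt0.
rewrite /delta.
have -> : (scaleHp p l = scaleHp p (mu / h)) =
          ((exists k, P ^+ k * (h / mu * l) = 1) \/ (exists k, h / mu * l = P ^+ k)).
  apply: propext.
  have -> : h / mu * l = l / (mu / h) by field; rewrite !gt_eqF.
  by apply: scale_eq => //; rewrite divr_gt0.
by case: asboolP => _; rewrite ?mulr1 ?mulr0.
Qed.


Lemma PAe_scale (c : R) (f : R -> R) a b : Hp p c -> PAe f a b -> PAe (fun y => c * f y) a b.
Proof. by move=> Hc [K H]; exists K; apply: PA_scale. Qed.

Lemma le_sum_term (n : nat) (F : 'I_n -> R) i : (forall j, 0 <= F j) ->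
  F i <= \sum_j F j.
Proof.
move=> F0; rewrite (bigD1 i) //= lerDl; apply: sumr_ge0 => j _; exact: F0.
Qed.

Variables (n m : nat) (h mu : 'I_n -> R) (h' mu' : 'I_m -> R).
Hypotheses (hh : forall i, Hp p (h i)) (hpos : forall i, 0 < h i)
  (mupos : forall i, 0 < mu i) (hh' : forall j, Hp p (h' j)) (hpos' : forall j, 0 < h' j)
  (mupos' : forall j, 0 < mu' j).
Variables (h0 : R).
Hypothesis h0Hp : Hp p h0.

Definition ff (l : R) := \sum_(i < n) Theta p (h i) (mu i) l
                        - \sum_(j < m) Theta p (h' j) (mu' j) l - h0 * l.

Definition FN N (y : R) := \sum_(i < n) TN N (h i) (mu i) y
                        - \sum_(j < m) TN N (h' j) (mu' j) y - h0 * y.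

Definition goodN N (y : R) :=
  (forall i, 1 < P ^+ N * (h i / mu i * y) /\ h i / mu i * y < P ^+ N) /\
  (forall j, 1 < P ^+ N * (h' j / mu' j * y) /\ h' j / mu' j * y < P ^+ N).

Lemma bound_one (hx mm a b y N : R) : 0 < hx -> 0 < mm -> 0 < a -> a <= y <= b ->
  hx / mm * b + mm / (hx * a) < N -> 1 < N * (hx / mm * y) /\ hx / mm * y < N.
Proof.
move=> hx0 m0 a0 /andP[ay yb] hN.
have t0 : 0 < hx / mm by rewrite divr_gt0.
have u0 : 0 < mm / (hx * a) by rewrite divr_gt0 // mulr_gt0.
have hb : hx / mm * y <= hx / mm * b by rewrite ler_pM2l.
split; last by lra.
have e : mm / (hx * a) * (hx / mm * a) = 1 by field; rewrite !gt_eqF.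
have ha : hx / mm * a <= hx / mm * y by rewrite ler_pM2l.
have ta : 0 < hx / mm * a by rewrite mulr_gt0.
have : mm / (hx * a) < N by lra.
move=> hN'; nra.
Qed.

Lemma bound (a b : R) : 0 < a -> exists N, forall y, a <= y <= b -> goodN N y.
Proof.
move=> a0.
pose X := \sum_(i < n) (h i / mu i * b + mu i / (h i * a))
        + \sum_(j < m) (h' j / mu' j * b + mu' j / (h' j * a)).
have [N hN] := pX_ge (`|X|).
exists N => y hy.
have b0 : 0 < b by case/andP: hy => ay yb; lra.
have T0 : forall (hx mm : R), 0 < hx -> 0 < mm -> 0 <= hx / mm * b + mm / (hx * a).
  move=> hx mm hx0 m0; apply: addr_ge0; apply: ltW.
    by rewrite mulr_gt0 // divr_gt0.
  by rewrite divr_gt0 // mulr_gt0.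
have S1 : 0 <= \sum_(i < n) (h i / mu i * b + mu i / (h i * a)).
  by apply: sumr_ge0 => i _; apply: T0.
have S2 : 0 <= \sum_(j < m) (h' j / mu' j * b + mu' j / (h' j * a)).
  by apply: sumr_ge0 => j _; apply: T0.
have XX : X <= `|X| by apply: ler_norm.
split => [i|j].
  apply: (bound_one _ _ _ _ _ _ (hpos i) (mupos i) a0 hy).
  have := le_sum_term _ _ i (fun i => T0 _ _ (hpos i) (mupos i)); rewrite /X in XX; lra.
apply: (bound_one _ _ _ _ _ _ (hpos' j) (mupos' j) a0 hy).
have := le_sum_term _ _ j (fun j => T0 _ _ (hpos' j) (mupos' j)); rewrite /X in XX; lra.
Qed.


Lemma ff_FN N y : 0 < y -> goodN N y -> ff y = FN N y.
Proof.
move=> y0 [Gi Gj]; rewrite /ff /FN; congr (_ - _ - _); apply: eq_bigr.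
  move=> i _; have [g1 g2] := Gi i.
  have e : h i * y / mu i = h i / mu i * y by rewrite mulrAC.
  apply: Theta_TN; rewrite ?e; [exact: mupos| |exact: ltW|exact: ltW].
  by rewrite mulr_ge0 // ltW // divr_gt0.
move=> j _; have [g1 g2] := Gj j.
have e : h' j * y / mu' j = h' j / mu' j * y by rewrite mulrAC.
apply: Theta_TN; rewrite ?e; [exact: mupos'| |exact: ltW|exact: ltW].
by rewrite mulr_ge0 // ltW // divr_gt0.
Qed.

Lemma FN_cont N l : FN N y @[y --> l] --> FN N l.
Proof.
apply: cvgB; last by apply: cvgMl_tmp; exact: cvg_id.
by apply: cvgB; apply: cont_sum => i; apply: TN_cont.
Qed.

Lemma FN_PA N a b : PAe (FN N) a b.
Proof.
have [K1 H1] := @PAe_sum _ (index_enum 'I_n) _ a b (fun i => TN_PA N (h i) (mu i) a b (hh i) (mupos i)).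
have [K2 H2] := PAe_scale _ _ a b (HpN 1 Hp1)
  (@PAe_sum _ (index_enum 'I_m) _ a b (fun j => TN_PA N (h' j) (mu' j) a b (hh' j) (mupos' j))).
have H3 := PA_affine (- h0) 0 a b (HpN _ h0Hp).
exists (K1 ++ K2 ++ [::]); rewrite catA.
apply: (PA_ext _ (PA_add _ _ _ _ _ _ (PA_add _ _ _ _ _ _ H1 H2) H3)) => y _; rewrite /FN; ring.
Qed.

Lemma FN_order N l : 0 < l -> goodN N l ->
  has_order_at (FN N) l (\sum_(i < n) delta p (h i) (mu i) (scaleHp p l)
                         - \sum_(j < m) delta p (h' j) (mu' j) (scaleHp p l)).
Proof.
move=> l0 [Gi Gj].
have H1 := @order_sum _ (index_enum 'I_n) _ _ l
   (fun i => TN_order N (h i) (mu i) l (hpos i) (mupos i) l0 (proj1 (Gi i)) (proj2 (Gi i))).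
have H2 := order_scale (-1) (@order_sum _ (index_enum 'I_m) _ _ l
   (fun j => TN_order N (h' j) (mu' j) l (hpos' j) (mupos' j) l0 (proj1 (Gj j)) (proj2 (Gj j)))).
have H3 := order_affine (- h0) 0 l.
apply: (order_eqfun _ _ (order_add (order_add H1 H2) H3)).
  by move=> y; rewrite /FN; ring.
ring.
Qed.


Lemma near_good (l : R) : 0 < l ->
  exists N, goodN N l /\ \forall y \near l, FN N y = ff y.
Proof.
move=> l0; have l20 : 0 < l / 2 by rewrite divr_gt0.
have [N HN] := bound (l / 2) (2 * l) l20.
exists N; split; first by apply: HN; apply/andP; split; lra.
have A1 := cvgr_gt _ (@cvg_id _ (nbhs l)) (l / 2) (_ : l / 2 < l).
have A2 := cvgr_lt _ (@cvg_id _ (nbhs l)) (2 * l) (_ : l < 2 * l).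
near=> y.
have y1 : l / 2 < y by near: y; apply: A1; lra.
have y2 : y < 2 * l by near: y; apply: A2; lra.
by symmetry; apply: ff_FN; [lra | apply: HN; apply/andP; split; lra].
Unshelve. all: by end_near.
Qed.

Lemma ff_cont (l : R) : 0 < l -> ff y @[y --> l] --> ff l.
Proof.
move=> l0; have [N [G H]] := near_good l l0.
have e : ff l = FN N l by apply: ff_FN.
rewrite e; apply: cvg_trans; last exact: FN_cont.
exact: near_eq_cvg.
Qed.

Lemma ff_pw (a b : R) : 0 < a -> a < b -> pwb ff a b.
Proof.
move=> a0 ab; have [N HN] := bound a b a0.
have [K H] := FN_PA N a b.
apply: (PA_pw _ K _ _ ab); apply: (PA_ext _ H) => y /andP[ay yb].
apply: ff_FN; [lra | apply: HN; by rewrite ay yb].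
Qed.

Lemma ff_order (l : R) : 0 < l ->
  has_order_at ff l (\sum_(i < n) delta p (h i) (mu i) (scaleHp p l)
                     - \sum_(j < m) delta p (h' j) (mu' j) (scaleHp p l)).
Proof.
move=> l0; have [N [G H]] := near_good l l0.
apply: (order_ext _ (FN_order N l l0 G)).
by near=> y; rewrite (near H y).
Unshelve. all: by end_near.
Qed.

Lemma Theta_per (hx mm l : R) : 0 < hx -> 0 < mm -> 0 < l ->
  Theta p hx mm (P * l) = Theta p hx mm l + hx * l - mm.
Proof.
move=> hx0 mm0 l0; rewrite /Theta.
have -> : hx * (P * l) / mm = P * (hx * l / mm) by ring.
rewrite theta_per; last by rewrite divr_gt0 // mulr_gt0.
by field; rewrite gt_eqF.
Qed.

Lemma ff_per (l : R) : 0 < l -> (P - 1) * h0 = \sum_(i < n) h i - \sum_(j < m) h' j ->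
  \sum_(i < n) mu i = \sum_(j < m) mu' j -> ff (P * l) = ff l.
Proof.
move=> l0 eh emu; rewrite /ff.
under eq_bigr do rewrite Theta_per //.
under [X in _ - X - _ = _]eq_bigr do rewrite Theta_per //.
rewrite !big_split /= !sumrN -!mulr_suml emu.
have -> : \sum_(i < n) h i = (P - 1) * h0 + \sum_(j < m) h' j by rewrite eh; ring.
ring.
Qed.


Lemma delta_sum (r : seq (set R)) (hx mm : R) : uniq r -> scaleHp p (mm / hx) \in r ->
  \sum_(H <- r) delta p hx mm H = mm.
Proof.
move=> ur Hr; rewrite (bigD1_seq _ Hr ur) /= /delta asboolT // big1 ?addr0 //.
move=> H /eqP nH; rewrite asboolF //.
Qed.

Lemma deg_mu (D : set R -> R) :
  (forall H, D H = \sum_(i < n) delta p (h i) (mu i) H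
                   - \sum_(j < m) delta p (h' j) (mu' j) H) ->
  deg p D = \sum_(i < n) mu i - \sum_(j < m) mu' j.
Proof.
move=> DE.
pose r := undup ([seq scaleHp p (mu i / h i) | i <- index_enum 'I_n]
              ++ [seq scaleHp p (mu' j / h' j) | j <- index_enum 'I_m]).
have ur : uniq r by apply: undup_uniq.
have inr1 i : scaleHp p (mu i / h i) \in r.
  by rewrite mem_undup mem_cat; apply/orP; left; apply/mapP; exists i => //; rewrite mem_index_enum.
have inr2 j : scaleHp p (mu' j / h' j) \in r.
  by rewrite mem_undup mem_cat; apply/orP; right; apply/mapP; exists j => //; rewrite mem_index_enum.
rewrite /deg (fsbig_fwiden r) //.
- rewrite (eq_bigr (fun H => \sum_(i < n) delta p (h i) (mu i) H
                   - \sum_(j < m) delta p (h' j) (mu' j) H)); last by move=> H _; rewrite DE.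
  rewrite sumrB exchange_big [X in _ - X]exchange_big /=.
  by congr (_ - _); apply: eq_bigr => i _; rewrite delta_sum.
- move=> H [CH DH] /=; case: (boolP (H \in r)) => // Hr; exfalso.
  move/negP: DH; apply; apply/eqP.
  rewrite DE !big1 ?subr0 // => i _; rewrite /delta asboolF // => eH;
    move/negP: Hr; apply; by rewrite eH ?inr1 ?inr2.
- move=> H [/= Hr nS]; rewrite /preimage /=.
  case: (eqVneq (D H) 0) => // hne; exfalso; apply: nS; split => //.
  move: Hr; rewrite mem_undup mem_cat => /orP[] /mapP [i _ ->].
    by exists (mu i / h i); split => //; rewrite divr_gt0.
  by exists (mu' i / h' i); split => //; rewrite divr_gt0.
Qed.

End S.

Theorem proposition5p11 (R : realType) (p : nat) (pr_p : prime p)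
  (n m : nat) (h mu : 'I_n -> R) (h' mu' : 'I_m -> R)
  (hh : forall i, Hp p (h i)) (hpos : forall i, 0 < h i) (mupos : forall i, 0 < mu i)
  (hh' : forall j, Hp p (h' j)) (hpos' : forall j, 0 < h' j)
  (mupos' : forall j, 0 < mu' j)
  (D Dp Dm : set R -> R)
  (Ddiv : is_divisor p D) (Dpdiv : is_divisor p Dp) (Dmdiv : is_divisor p Dm)
  (Dpeff : effective p Dp) (Dmeff : effective p Dm)
  (DE : forall H, D H = Dp H - Dm H)
  (DpE : forall H, Dp H = \sum_(i < n) delta p (h i) (mu i) H)
  (DmE : forall H, Dm H = \sum_(j < m) delta p (h' j) (mu' j) H)
  (deg0 : deg p D = 0)
  (h0 : R) (h0Hp : Hp p h0)
  (h0E : (p%:R - 1) * h0 = \sum_(i < n) h i - \sum_(j < m) h' j) :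
  let f := fun l : R => \sum_(i < n) Theta p (h i) (mu i) l
                        - \sum_(j < m) Theta p (h' j) (mu' j) l - h0 * l in
  [/\ (forall l : R, 0 < l -> {for l, continuous f}),
      pw_affine_Hp p f,
      (forall l : R, 0 < l -> f (p%:R * l) = f l) &
      (forall l : R, 0 < l -> has_order_at f l (D (scaleHp p l)))].
Proof.
move=> f; rewrite /f.
have DE' : forall H, D H = \sum_(i < n) delta p (h i) (mu i) H
                   - \sum_(j < m) delta p (h' j) (mu' j) H.
  by move=> H; rewrite DE DpE DmE.
have smu : \sum_(i < n) mu i = \sum_(j < m) mu' j.
  apply/eqP; rewrite -subr_eq0; apply/eqP.
  by rewrite -(deg_mu R p n m h mu h' mu' hpos mupos hpos' mupos' D DE').
split.
- move=> l l0; have H := (ff_cont R p pr_p n m h mu h' mu' hpos mupos hpos' mupos' h0 l l0); exact H.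
- by move=> a b a0 ab; exact: (ff_pw R p pr_p n m h mu h' mu' hh hpos mupos hh' hpos' mupos' h0 h0Hp a b a0 ab).
- by move=> l l0; exact: (ff_per R p pr_p n m h mu h' mu' hpos mupos hpos' mupos' h0 l l0 h0E smu).
move=> l l0; rewrite DE'.
exact: (ff_order R p pr_p n m h mu h' mu' hpos mupos hpos' mupos' h0 l l0).
Qed.
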